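(* Let $\nu\ge 0$, $0\le a<b$ and $d>0$. Then $$\int_{a}^b u^{\nu}e^{-du}\,du \stackrel c \approx b^\nu\left(\frac{a+\frac 1d}{b+\frac 1d}\right)^\nu e^{-ad}\,\frac {b-a} {d(b-a)+1},$$ where the comparability constant $c$ depends only on $\nu$.
   Context: $f\stackrel c\approx g$ means $c^{-1}g\le f\le cg$ for all indicated values of the variables, with $c>0$ depending only on the stated parameters. *)

(* Defs.v *)
From HB Require Import structures.
From mathcomp Require Import all_boot all_order all_algebra.
From mathcomp Require Import all_classical all_reals all_analysis.
Set Implicit Arguments. Unset Strict Implicit. Unset Printing Implicit Defensive.
Import Order.TTheory GRing.Theory Num.Theory.
Local Open Scope classical_set_scope.
Local Open Scope ring_scope.

Definition gamma_piece (R : realType) (nu a b d : R) : R :=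
  Rintegral (@lebesgue_measure R) `[a, b] (fun u : R => u `^ nu * expR (- (d * u))).

Definition gamma_piece_approx (R : realType) (nu a b d : R) : R :=
  b `^ nu * ((a + d^-1) / (b + d^-1)) `^ nu * expR (- (a * d))
    * ((b - a) / (d * (b - a) + 1)).

(* Main.v *)
Require Import Defs.
From HB Require Import structures.
From mathcomp Require Import all_boot all_order all_algebra.
From mathcomp Require Import all_classical all_reals all_analysis.
From mathcomp Require Import ring lra measurable_realfun.
Import Order.TTheory GRing.Theory Num.Theory.
Import numFieldTopology.Exports.
Local Open Scope classical_set_scope.
Local Open Scope ring_scope.

Section HH.
Context {R : realType}.
Notation mu := (@lebesgue_measure R).

Lemma cexpk (k : R) : continuous (fun z : R => expR (- (k * z))).
Proof.
move=> z; apply: continuous_comp; last exact: continuous_expR.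
apply: (@continuousN _ R^o).
by apply: continuousM => //; exact: cst_continuous.
Qed.

Lemma int_expk (k p q : R) : 0 < k -> p < q ->
  \int[mu]_(x in `[p, q]) expR (- (k * x)) =
  (expR (- (k * p)) - expR (- (k * q))) / k.
Proof.
move=> k0 pq.
rewrite /Rintegral (@continuous_FTC2 _ _ (fun x => - (k^-1 * expR (- (k * x))))) //=.
- by rewrite opprK addrC -mulrBr mulrC.
- exact/continuous_subspaceT/cexpk.
- split.
  + by move=> z _; exact: ex_derive.
  + apply/cvg_at_right_filter; apply: cvgN; apply: cvgM; first exact: cvg_cst.
    exact: cexpk.
  + apply/cvg_at_left_filter; apply: cvgN; apply: cvgM; first exact: cvg_cst.
    exact: cexpk.
- move=> z _.
  rewrite derive1E deriveN// deriveZ//= -derive1E derive1_comp//.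
  rewrite derive1E; have /funeqP -> := @derive_expR R.
  rewrite derive1N// derive1E deriveZ// derive_id.
  change (- (k^-1 * (expR (- (k * z)) * - (k * 1))) = expR (- (k * z))).
  by rewrite mulr1 !mulrN opprK mulrCA mulVf ?mulr1 ?gt_eqF.
Qed.

Definition ff (nu d : R) := fun u : R => u `^ nu * expR (- (d * u)).

Lemma ff_meas nu d (A : set R) : measurable A -> measurable_fun A (ff nu d).
Proof.
move=> mA; apply: measurable_funTS; apply: measurable_realfun.measurable_funM => //.
exact: measurable_realfun.continuous_measurable_fun (cexpk d).
Qed.

Lemma ff_ge0 nu d u : 0 <= ff nu d u.
Proof. by rewrite /ff mulr_ge0 ?powR_ge0 ?expR_ge0. Qed.

Lemma ff_int nu d p q : 0 <= nu -> 0 <= p -> 0 <= d ->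
  mu.-integrable `[p, q] (EFin \o ff nu d).
Proof.
move=> nu0 p0 d0.
apply: (@le_integrable _ _ _ mu `[p, q]%classic (measurable_itv _) _ (EFin \o cst (q `^ nu))).
- by apply/measurable_EFinP; exact: ff_meas.
- move=> x /=; rewrite in_itv/= => /andP[px xq].
  rewrite lee_fin ger0_norm ?ff_ge0// ger0_norm ?powR_ge0//.
  rewrite /ff -[leRHS]mulr1 ler_pM ?powR_ge0 ?expR_ge0//.
    by apply: ge0_ler_powR => //; rewrite nnegrE; lra.
  by rewrite expR_le1 oppr_le0 mulr_ge0//; lra.
- apply: continuous_compact_integrable; first exact: segment_compact.
  by apply: continuous_subspaceT; exact: cst_continuous.
Qed.

Lemma Rint_sub (f : R -> R) (p1 q1 p q : R) :
  p <= p1 -> q1 <= q -> (forall x, 0 <= f x) ->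
  mu.-integrable `[p, q] (EFin \o f) ->
  \int[mu]_(x in `[p1, q1]) f x <= \int[mu]_(x in `[p, q]) f x.
Proof.
move=> pp1 qq1 f0 fi.
have AB : `[p1, q1] `<=` `[p, q] by apply: subset_itv; rewrite bnd_simp.
rewrite /Rintegral fine_le//.
- apply: integrable_fin_num => //. exact: integrableS fi.
- exact: integrable_fin_num.
- apply: ge0_subset_integral => //.
  + by case/integrableP: fi.
  + by move=> x _; rewrite lee_fin f0.
Qed.

Lemma Rint_cst_itv (c p q : R) : p <= q ->
  \int[mu]_(x in `[p, q]) c = c * (q - p).
Proof.
move=> pq; rewrite Rintegral_cst//; congr (_ * _).
have := lebesgue_measure_itv `[p, q]; move=> /= ->.
case: ifPn => [_|]; first by rewrite -EFinD.
rewrite lte_fin -leNgt => qp.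
have -> : q = p by apply/le_anti; rewrite qp pq.
by rewrite subrr.

Qed.

Lemma ptA (nu m0 a d u : R) : 0 <= nu -> 1 <= m0 -> 2 * nu <= m0 ->
  0 <= a -> a <= u -> 0 < d ->
  u `^ nu <= m0 `^ nu * (a + d^-1) `^ nu * expR (d / 2 * (u - a)).
Proof.
move=> nu0 m01 m0nu a0 au d0.
set t := d * (u - a).
have t0 : 0 <= t by rewrite mulr_ge0; lra.
have m00 : 0 < m0 by lra.
have h1 : 1 + t <= m0 * expR (t / m0).
  have := expR_ge1Dx (t / m0).
  rewrite -(ler_pM2l m00) mulrDr mulr1 mulrCA divff ?gt_eqF// mulr1.
  lra.
have Dd : d^-1 * d = 1 by rewrite mulVf ?gt_eqF.
have uE : u = a + d^-1 * t by rewrite /t mulrA Dd mul1r; lra.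
have D0 : 0 < d^-1 by rewrite invr_gt0.
have h2 : u <= (a + d^-1) * (m0 * expR (t / m0)).
  apply: (@le_trans _ _ ((a + d^-1) * (1 + t))); last first.
    by rewrite ler_pM2l//; lra.
  rewrite uE mulrDr mulr1 mulrDl; nra.
have -> : m0 `^ nu * (a + d^-1) `^ nu = (a + d^-1) `^ nu * m0 `^ nu by rewrite mulrC.
apply: (@le_trans _ _ (((a + d^-1) * (m0 * expR (t / m0))) `^ nu)).
  by apply: ge0_ler_powR => //; rewrite nnegrE; lra.
rewrite powRM; last 2 first.
- lra.
- by rewrite mulr_ge0 ?expR_ge0//; lra.
rewrite powRM ?expR_ge0//; last lra.
rewrite -expRM mulrA ler_pM2l; last first.
  by rewrite mulr_gt0// powR_gt0//; lra.
rewrite ler_expR.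
have -> : d / 2 * (u - a) = t / 2 by rewrite /t mulrAC.
rewrite mulrAC ler_pdivrMr// [t / 2 * m0]mulrAC ler_pdivlMr//.
nra.
Qed.

Lemma ptB (nu a b d u : R) : 0 <= nu -> 0 <= a -> a <= u -> u <= b -> 0 < d ->
  ff nu d u <= b `^ nu * expR (- (a * d)).
Proof.
move=> nu0 a0 au ub d0; rewrite /ff ler_pM ?powR_ge0 ?expR_ge0//.
  by apply: ge0_ler_powR => //; rewrite nnegrE; lra.
by rewrite ler_expR lerN2 mulrC ler_pM2l.
Qed.

Lemma cst_int (c p q : R) : mu.-integrable `[p, q] (EFin \o cst c).
Proof.
apply: continuous_compact_integrable; first exact: segment_compact.
by apply: continuous_subspaceT; exact: cst_continuous.
Qed.

Lemma lowI nu a b d m s : 0 <= nu -> 0 <= a -> 0 < d -> 0 < m -> d * m <= 1 ->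
  0 <= s -> s <= 2 * a + m -> a + m <= b ->
  (s / 2) `^ nu * (expR (- (a * d)) * expR (-1)) * (m / 2)
    <= \int[mu]_(x in `[a, b]) ff nu d x.
Proof.
move=> nu0 a0 d0 m0 dm1 s0 s2 amb.
apply: (@le_trans _ _ (\int[mu]_(x in `[a + m / 2, a + m]) ff nu d x)); last first.
  apply: Rint_sub.
  - lra.
  - lra.
  - exact: ff_ge0.
  - by apply: ff_int => //; exact: ltW.
rewrite [X in X <= _](_ : _ = (s / 2) `^ nu * (expR (- (a * d)) * expR (-1)) *
  ((a + m) - (a + m / 2))); last by congr (_ * _); lra.
rewrite -Rint_cst_itv; last lra.
apply: le_Rintegral => //.
- exact: cst_int.
- apply: ff_int => //; lra.
- move=> x /=; rewrite in_itv/= => /andP[x1 x2].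
  rewrite /ff ler_pM ?powR_ge0 ?mulr_ge0 ?expR_ge0//.
    by apply: ge0_ler_powR => //; rewrite ?nnegrE; lra.
  rewrite -expRD ler_expR.
  have : d * x <= d * (a + m) by rewrite ler_pM2l.
  nra.
Qed.

Lemma upI1 nu a b d : 0 <= nu -> 0 <= a -> a <= b -> 0 < d ->
  \int[mu]_(x in `[a, b]) ff nu d x <= b `^ nu * expR (- (a * d)) * (b - a).
Proof.
move=> nu0 a0 ab d0.
rewrite -Rint_cst_itv//.
apply: le_Rintegral => //.
- by apply: ff_int => //; exact: ltW.
- exact: cst_int.
- move=> x /=; rewrite in_itv/= => /andP[x1 x2].
  exact: ptB.
Qed.

Lemma upI2 nu m0 a b d : 0 <= nu -> 1 <= m0 -> 2 * nu <= m0 ->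
  0 <= a -> a < b -> 0 < d ->
  \int[mu]_(x in `[a, b]) ff nu d x <=
    m0 `^ nu * (a + d^-1) `^ nu * expR (- (a * d)) * (2 * d^-1).
Proof.
move=> nu0 m01 m0nu a0 ab d0.
set k := d / 2.
have k0 : 0 < k by rewrite /k divr_gt0.
set C := m0 `^ nu * (a + d^-1) `^ nu * expR (- (a * d)) * expR (k * a).
have C0 : 0 <= C by rewrite /C !mulr_ge0 ?powR_ge0 ?expR_ge0.
apply: (@le_trans _ _ (\int[mu]_(x in `[a, b]) (C * expR (- (k * x))))).
  apply: le_Rintegral => //.
  - by apply: ff_int => //; exact: ltW.
  - apply: continuous_compact_integrable; first exact: segment_compact.
    apply: continuous_subspaceT => x.
    apply: (@continuousM _ R^o (fun=> C) (fun x => expR (- (k * x)))).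
      exact: cst_continuous.
    exact: cexpk.
  - move=> x /=; rewrite in_itv/= => /andP[x1 x2].
    rewrite /ff.
    apply: (@le_trans _ _ (m0 `^ nu * (a + d^-1) `^ nu * expR (d / 2 * (x - a))
       * expR (- (d * x)))).
      by rewrite ler_pM2r ?expR_gt0//; exact: ptA.
    rewrite le_eqVlt; apply/orP; left; apply/eqP.
    rewrite /C /k -!mulrA; congr (_ * (_ * _)).
    by rewrite -!expRD; congr expR; field.
have iE : mu.-integrable `[a, b] (EFin \o (fun x => expR (- (k * x)))).
  apply: continuous_compact_integrable; first exact: segment_compact.
  by apply: continuous_subspaceT; exact: cexpk.
rewrite [X in X <= _](_ : _ = C * \int[mu]_(x in `[a, b]) expR (- (k * x))); last first.
  by apply: (@RintegralZl _ _ _ mu _ (fun x => expR (- (k * x))) C).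
rewrite int_expk//.
apply: (@le_trans _ _ (C * (expR (- (k * a)) / k))).
  apply: ler_wpM2l => //.
  by rewrite ler_pM2r ?invr_gt0// gerBl expR_ge0.
have e1 : expR (k * a) * expR (- (k * a)) = 1 by rewrite -expRD subrr expR0.
rewrite /C -mulrA (mulrA (expR (k * a))) e1 mul1r.
rewrite le_eqVlt; apply/orP; left; apply/eqP; congr (_ * _).
rewrite /k; field; exact: lt0r_neq0.
Qed.

Lemma final_arith (g I X K e h : R) : 0 < h -> 1 <= K -> 1 <= e -> 0 <= X ->
  g <= X -> h * X / 2 <= g -> h * X / e / 2 <= I -> I <= 2 * K * X ->
  (4 * K * e / h)^-1 * g <= I /\ I <= (4 * K * e / h) * g.
Proof.
move=> h0 K1 e1 X0 g1 g2 i1 i2.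
have K0 : 0 < K by lra.
have e0 : 0 < e by lra.
have c0 : 0 < 4 * K * e / h by rewrite divr_gt0// !mulr_gt0.
split.
  apply: (@le_trans _ _ ((4 * K * e / h)^-1 * X)).
    by rewrite ler_wpM2l// invr_ge0 ltW.
  have Y0 : 0 <= h * X / e by rewrite divr_ge0 ?mulr_ge0//; lra.
  have -> : (4 * K * e / h)^-1 * X = (h * X / e) / (4 * K).
    by field; rewrite !lt0r_neq0.
  apply: le_trans i1.
  rewrite ler_pdivrMr ?mulr_gt0//.
  have -> : h * X / e / 2 * (4 * K) = 2 * K * (h * X / e) by field; exact: lt0r_neq0.
  nra.
apply: (le_trans i2).
apply: (@le_trans _ _ ((4 * K * e / h) * (h * X / 2))); last first.
  by rewrite ler_wpM2l// ltW.
have -> : 4 * K * e / h * (h * X / 2) = 2 * K * e * X.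
  by field; rewrite lt0r_neq0.
have : 0 <= K * X * (e - 1) by rewrite !mulr_ge0 //; lra.
nra.
Qed.

Lemma combine (nu K a b d s m J : R) : 0 <= nu -> 1 <= K -> 0 <= a -> a < b -> 0 < d ->
  0 <= s -> 0 < m ->
  s / 2 <= b * ((a + d^-1) / (b + d^-1)) <= s ->
  m / 2 <= (b - a) / (d * (b - a) + 1) <= m ->
  (s / 2) `^ nu * (expR (- (a * d)) * expR (-1)) * (m / 2) <= J ->
  J <= 2 * K * (s `^ nu * expR (- (a * d)) * m) ->
  let g := b `^ nu * ((a + d^-1) / (b + d^-1)) `^ nu * expR (- (a * d))
    * ((b - a) / (d * (b - a) + 1)) in
  let c := 4 * K * expR 1 / 2^-1 `^ nu in
  c^-1 * g <= J /\ J <= c * g.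
Proof.
move=> nu0 K1 a0 ab d0 s0 m0 /andP[Q1 Q2] /andP[W1 W2] i1 i2 g c.
have D0 : 0 < d^-1 by rewrite invr_gt0.
have h0 : 0 < 2^-1 `^ nu by rewrite powR_gt0.
have e1 : 1 <= expR (1 : R) by have := expR_ge1Dx (1 : R); lra.
have sh : (s / 2) `^ nu = s `^ nu * 2^-1 `^ nu by rewrite powRM.
have Q0 : 0 <= b * ((a + d^-1) / (b + d^-1)).
  by rewrite mulr_ge0 ?divr_ge0//; lra.
have gE : g = (b * ((a + d^-1) / (b + d^-1))) `^ nu * expR (- (a * d))
    * ((b - a) / (d * (b - a) + 1)).
  rewrite /g (@powRM _ b ((a + d^-1) / (b + d^-1)) nu) //; first lra.
  by rewrite divr_ge0 //; lra.
have W0 : 0 <= (b - a) / (d * (b - a) + 1).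
  by apply: le_trans W1; rewrite divr_ge0//; lra.
apply: (@final_arith g J (s `^ nu * expR (- (a * d)) * m) K (expR 1) (2^-1 `^ nu)).
- exact: h0.
- exact: K1.
- exact: e1.
- by rewrite !mulr_ge0 ?powR_ge0 ?expR_ge0//; lra.
- rewrite gE; apply: ler_pM => //.
    by rewrite mulr_ge0 ?powR_ge0 ?expR_ge0.
  rewrite ler_pM2r ?expR_gt0//.
  by apply: ge0_ler_powR => //; rewrite ?nnegrE.
- rewrite gE.
  have -> : 2^-1 `^ nu * (s `^ nu * expR (- (a * d)) * m) / 2 =
      (s / 2) `^ nu * expR (- (a * d)) * (m / 2).
    by rewrite sh; ring.
  apply: ler_pM; rewrite ?mulr_ge0 ?powR_ge0 ?expR_ge0 ?divr_ge0//; try lra.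
  rewrite ler_pM2r ?expR_gt0//.
  apply: ge0_ler_powR => //; rewrite ?nnegrE//; lra.
- apply: le_trans i1.
  rewrite le_eqVlt; apply/orP; left; apply/eqP.
  by rewrite sh (expRN 1); ring.
- exact: i2.
Qed.

Lemma Qb1 (a b D : R) : 0 <= a -> a < b -> 0 < D -> b - a <= D ->
  b / 2 <= b * ((a + D) / (b + D)) <= b.
Proof.
move=> a0 ab D0 LD; have bD : 0 < b + D by lra.
rewrite mulrA ler_pdivlMr// ler_pdivrMr// mulrAC ler_pdivrMr//.
have h1 : 0 <= b * (2 * a + D - b) by rewrite mulr_ge0 //; lra.
have h2 : 0 <= b * (b - a) by rewrite mulr_ge0 //; lra.
apply/andP; split; nra.
Qed.

Lemma Qb2 (a b D : R) : 0 <= a -> a < b -> 0 < D -> D < b - a ->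
  (a + D) / 2 <= b * ((a + D) / (b + D)) <= a + D.
Proof.
move=> a0 ab D0 LD; have bD : 0 < b + D by lra.
rewrite mulrA ler_pdivlMr// ler_pdivrMr// mulrAC ler_pdivrMr//.
have h1 : 0 <= (a + D) * (b - D) by rewrite mulr_ge0 //; lra.
have h2 : 0 <= (a + D) * D by rewrite mulr_ge0 //; lra.
apply/andP; split; nra.
Qed.

Lemma Wb1 (a b d : R) : a < b -> 0 < d -> b - a <= d^-1 ->
  (b - a) / 2 <= (b - a) / (d * (b - a) + 1) <= b - a.
Proof.
move=> ab d0 LD.
have dL : d * (b - a) <= 1.
  by rewrite -(mulfV (lt0r_neq0 d0)) ler_pM2l.
have dL0 : 0 <= d * (b - a) by rewrite mulr_ge0 //; lra.
have p : 0 < d * (b - a) + 1 by lra.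
rewrite ler_pdivlMr// ler_pdivrMr// mulrAC ler_pdivrMr//.
apply/andP; split; nra.
Qed.

Lemma Wb2 (a b d : R) : a < b -> 0 < d -> d^-1 < b - a ->
  d^-1 / 2 <= (b - a) / (d * (b - a) + 1) <= d^-1.
Proof.
move=> ab d0 LD.
have Dd : d^-1 * d = 1 by rewrite mulVf ?lt0r_neq0.
have dL0 : 0 <= d * (b - a) by rewrite mulr_ge0 //; lra.
have p : 0 < d * (b - a) + 1 by lra.
rewrite ler_pdivlMr// ler_pdivrMr// mulrAC ler_pdivrMr//.
have e : d^-1 * (d * (b - a) + 1) = (b - a) + d^-1.
  by rewrite mulrDr mulrA Dd mul1r mulr1.
have D0 : 0 < d^-1 by rewrite invr_gt0.
rewrite e; apply/andP; split; lra.
Qed.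
End HH.

Theorem mainTheorem10 (R : realType) (nu : R) (hnu : 0 <= nu) :
  exists c : R, 0 < c /\
    forall a b d : R, 0 <= a -> a < b -> 0 < d ->
      c^-1 * gamma_piece_approx nu a b d <= gamma_piece nu a b d /\
      gamma_piece nu a b d <= c * gamma_piece_approx nu a b d.
Proof.
pose m0 : R := Num.max 1 (2 * nu).
have m01 : 1 <= m0 by rewrite le_max lexx.
have m0nu : 2 * nu <= m0 by rewrite le_max lexx orbT.
pose K := m0 `^ nu.
have K1 : 1 <= K.
  have := @ge0_ler_powR R nu hnu 1 m0; rewrite !nnegrE powR1 /=; apply => //; lra.
exists (4 * K * expR 1 / 2^-1 `^ nu); split.
  by rewrite divr_gt0 ?powR_gt0 // !mulr_gt0 ?expR_gt0 //; lra.
move=> a b d a0 ab d0.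
have -> : gamma_piece nu a b d =
  \int[@lebesgue_measure R]_(x in `[a, b]) ff nu d x by [].
rewrite /gamma_piece_approx.
have D0 : 0 < d^-1 by rewrite invr_gt0.
have [LD|DL] := lerP (b - a) d^-1.
- apply: (@combine R nu K a b d b (b - a)) => //.
  + lra.
  + lra.
  + exact: Qb1.
  + exact: Wb1.
  + apply: lowI => //; try lra.
    by rewrite -(mulfV (lt0r_neq0 d0)) ler_pM2l.
  + apply: le_trans (@upI1 R nu a b d hnu a0 (ltW ab) d0) _.
    have X0 : 0 <= b `^ nu * expR (- (a * d)) * (b - a).
      by rewrite !mulr_ge0 ?powR_ge0 ?expR_ge0 //; lra.
    nra.
- apply: (@combine R nu K a b d (a + d^-1) d^-1) => //.
  + lra.
  + exact: Qb2.
  + exact: Wb2.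
  + apply: lowI => //; try lra.
    by rewrite mulfV ?lt0r_neq0.
  + apply: le_trans (@upI2 R nu m0 a b d hnu m01 m0nu a0 ab d0) _.
    rewrite /K le_eqVlt; apply/orP; left; apply/eqP; ring.
Qed.
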